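(* Let $n\ge 3$. The spectral radius of the power graph $P(G(n))$ of the gyrogroup $G(n)$ (defined in the context) satisfies $$\lambda_1(P(\mathbb{Z}_{2^{n-1}}))<\lambda_1(P(G(n)))\le \lambda_1(P(\mathbb{Z}_{2^{n-1}}))+\sqrt{2^{n-1}},$$ where $P(\mathbb{Z}_{2^{n-1}})$ is the power graph of the cyclic group of order $2^{n-1}$.
   Context: Let $n\ge 3$ be an integer and $m=2^{n-1}$. Let $P(n)=\{0,1,\dots,m-1\}$, $H(n)=\{m,m+1,\dots,2^n-1\}$ and $G(n)=P(n)\cup H(n)$. For $i,j\in G(n)$ let $t,s,k\in P(n)$ be the residues modulo $m$ (taken in $\{0,\dots,m-1\}$) of $i+j$, $i+(\frac m2-1)j$ and $(\frac m2+1)i+(\frac m2-1)j$, respectively, and define $i\oplus j=t$ if $i,j\in P(n)$; $i\oplus j=t+m$ if $i\in P(n),j\in H(n)$; $i\oplus j=s+m$ if $i\in H(n),j\in P(n)$; $i\oplus j=k$ if $i,j\in H(n)$. Then $(G(n),\oplus)$ is a gyrogroup with identity $e=0$. Powers are defined by $a^1=a$, $a^{k+1}=a^k\oplus a$ (in a group, the usual powers). The power graph $P(X)$ of $X$ (a group or $G(n)$) is the simple undirected graph with vertex set $X$ in which distinct vertices $u,v$ are adjacent if and only if $u^k=v$ or $v^k=u$ for some positive integer $k$. For a graph $\Gamma$, $\lambda_1(\Gamma)$ denotes the largest eigenvalue of its adjacency matrix (spectral radius). *)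

(* Defs.v *)
From HB Require Import structures.
From mathcomp Require Import all_boot all_order all_algebra.
From mathcomp Require Import boolp reals.
Set Implicit Arguments. Unset Strict Implicit. Unset Printing Implicit Defensive.
Import Order.TTheory GRing.Theory Num.Theory.
Local Open Scope ring_scope.

(* Elements of the algebraic structures are represented by natural numbers
   (the carrier {0,...,N-1} is indexed by 'I_N in the adjacency matrix). *)

(* Gyrogroup operation of G(n), with m = 2^(n-1), P(n) = [0,m), H(n) = [m,2^n). *)
Definition gyro_op (n : nat) (i j : nat) : nat :=
  let m := (2 ^ n.-1)%N in
  let t := ((i + j) %% m)%N in
  let s := ((i + (m %/ 2 - 1) * j) %% m)%N in
  let k := (((m %/ 2 + 1) * i + (m %/ 2 - 1) * j) %% m)%N in
  if (i < m)%N then (if (j < m)%N then t else t + m)%N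
  else (if (j < m)%N then s + m else k)%N.

Definition zmod_op (m : nat) (i j : nat) : nat := ((i + j) %% m)%N.

Definition pw (op : nat -> nat -> nat) (a : nat) (k : nat) : nat :=
  iter k.-1 (fun x => op x a) a.

Definition power_adj (op : nat -> nat -> nat) (u v : nat) : Prop :=
  u <> v /\ exists k : nat, (0 < k)%N /\ (pw op u k = v \/ pw op v k = u).

Definition power_graph_adjmx (R : realType) (N : nat) (op : nat -> nat -> nat)
  : 'M[R]_N :=
  \matrix_(i < N, j < N) (asbool (power_adj op i j))%:R.

Definition is_lambda1 (R : realType) (N : nat) (A : 'M[R]_N) (l : R) : Prop :=
  eigenvalue A l /\ forall l' : R, eigenvalue A l' -> l' <= l.

(* Main.v *)
Require Import Defs.
From HB Require Import structures.
From mathcomp Require Import all_boot all_order all_algebra.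
From mathcomp Require Import boolp reals.
From mathcomp Require Import zify ring lra.
Import Order.TTheory GRing.Theory Num.Theory.
Local Open Scope nat_scope.
Local Open Scope ring_scope.

Lemma cubic_root (R : realType) (M : R) : 4 <= M ->
  exists x : R, M - 1 < x /\ x <= M - 1 + Num.sqrt M /\
    x ^+ 3 - (M - 2) * x ^+ 2 - (2 * M - 1) * x + M * (M - 2) = 0.
Proof.
move=> hM.
pose p : {poly R} := 'X^3 - (M - 2) *: 'X^2 - (2 * M - 1) *: 'X + (M * (M - 2))%:P.
have ev : forall x, p.[x] = x ^+ 3 - (M - 2) * x ^+ 2 - (2 * M - 1) * x + M * (M - 2).
  by move=> x; rewrite /p !hornerE.
set s := Num.sqrt M.
have s0 : 0 <= s by apply: sqrtr_ge0.
have s2 : s ^+ 2 = M by rewrite sqr_sqrtr //; lra.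
have s2' : s * s = M by rewrite -expr2.
have s1 : 2 <= s.
  nra.
have hab : M - 1 <= M - 1 + s by lra.
have hp : p.[M-1] <= 0 <= p.[M - 1 + s].
  have e : p.[M - 1 + s] = s * (M ^+ 2 - M) + 2 * M ^+ 2 - 2 * M.
    by rewrite ev -s2; ring.
  apply/andP; split; first by rewrite ev; nra.
  have h1 : 0 <= M ^+ 2 - M by rewrite expr2; nra.
  have := mulr_ge0 s0 h1; rewrite e; nra.
have [x /andP[xa xb] rx] := poly_ivt hab hp.
  exists x; split; last split => //; last by rewrite -ev; apply/eqP.
  rewrite lt_neqAle xa andbT; apply/eqP => ex.
  move: rx; rewrite /root ev -ex => /eqP; nra.
Qed.
Local Open Scope nat_scope.
Local Open Scope ring_scope.

Lemma eig_le (R : realType) N (A : 'M[R]_N) (w : 'rV[R]_N) lam :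
  (forall i j, 0 <= A i j) -> (forall j, 0 < w 0 j) -> w *m A = lam *: w ->
  forall l, eigenvalue A l -> l <= lam.
Proof.
move=> A0 w0 hw l /eigenvalueP [v hv vn0].
case: N A w v A0 w0 hw hv vn0 => [|N] A w v A0 w0 hw hv vn0.
  by rewrite thinmx0 eqxx in vn0.
pose F := fun j : 'I_N.+1 => `|v 0 j| / w 0 j.
have [j _ jmax] : exists2 j, true & forall i, F i <= F j.
  case: (@arg_maxP _ _ 'I_N.+1 ord0 xpredT F isT) => j _ h.
  by exists j => // i; apply: h.
have [i vi] : exists i, v 0 i != 0.
  apply/existsP; move: vn0; apply: contraR; rewrite negb_exists => /forallP h.
  apply/eqP/rowP => k; have := h k; rewrite negbK => /eqP ->.
  by rewrite !mxE.
have Fi : 0 < F i by rewrite /F divr_gt0 // normr_gt0.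
have Fj : 0 < F j by apply: lt_le_trans (jmax i).
have vj : 0 < `|v 0 j|.
  by move: Fj; rewrite /F pmulr_lgt0 // invr_gt0.
have bound : forall k, `|v 0 k| <= F j * w 0 k.
  move=> k; have := jmax k; rewrite /F ler_pdivrMr //.
have key : `|l| * `|v 0 j| <= lam * `|v 0 j|.
  have e1 : l * v 0 j = \sum_k v 0 k * A k j.
    by have := congr1 (fun X : 'rV[R]_N.+1 => X 0 j) hv; rewrite /= !mxE => <-.
  have e2 : lam * w 0 j = \sum_k w 0 k * A k j.
    by have := congr1 (fun X : 'rV[R]_N.+1 => X 0 j) hw; rewrite /= !mxE => <-.
  rewrite -normrM e1.
  apply: le_trans (ler_norm_sum _ _ _) _.
  have h3 : \sum_k `|v 0 k * A k j| <= \sum_k F j * (w 0 k * A k j).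
    apply: ler_sum => k _; rewrite normrM (ger0_norm (A0 k j)) mulrA.
    by apply: ler_wpM2r => //.
  apply: le_trans h3 _.
  rewrite -mulr_sumr -e2 /F mulrCA -mulrA mulVf ?mulr1 //.
  by rewrite gt_eqF.
have : `|l| <= lam by rewrite -(ler_pM2r vj).
by apply: le_trans; apply: ler_norm.
Qed.
Local Open Scope nat_scope.

Lemma iter_zmod m a j : (a < m)%N ->
  iter j (fun x => zmod_op m x a) a = (j.+1 * a) %% m.
Proof.
move=> am; elim: j => [|j IH] /=; first by rewrite mul1n modn_small.
by rewrite IH /zmod_op modnDml mulSn addnC.
Qed.

Lemma pw_zmod m a k : (0 < k)%N -> (a < m)%N -> pw (zmod_op m) a k = (k * a) %% m.
Proof. by case: k => // k _ am; rewrite /pw iter_zmod. Qed.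

Lemma reach m u v : (0 < m)%N -> (u < m)%N -> (v < m)%N -> (gcdn u m %| v)%N ->
  exists k, (0 < k)%N /\ pw (zmod_op m) u k = v.
Proof.
move=> m0 um vm.
case: (posnP u) => [->|u0].
  rewrite gcd0n => /dvdnP [q ev].
  have -> : v = 0%N.
    by rewrite ev in vm *; case: q {ev} vm => // q; rewrite mulSn; lia.
  by exists 1%N; rewrite pw_zmod // mul1n mod0n.
case/dvdnP => t ev; subst v.
case: (egcdnP m u0) => km kn e _.
exists (km * t + m)%N; split; first lia.
rewrite pw_zmod //; last lia.
have -> : ((km * t + m) * u = (kn * t) * m + t * gcdn u m + u * m)%N.
  have -> : ((km * t + m) * u = t * (km * u) + u * m)%N by ring.
  rewrite e; ring.
rewrite -addnA (addnC (t * _)) addnA. rewrite -mulnDl. by rewrite modnMDl modn_small.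
Qed.

Lemma zmod_adj e u v : (u < 2 ^ e)%N -> (v < 2 ^ e)%N -> u <> v ->
  power_adj (zmod_op (2 ^ e)) u v.
Proof.
move=> um vm uv; split => //.
have m0 : (0 < 2 ^ e)%N by rewrite expn_gt0.
have [a _ ea] := dvdn_pfactor (gcdn u (2 ^ e)) e (isT : prime 2) (dvdn_gcdr _ _).
have [b _ eb] := dvdn_pfactor (gcdn v (2 ^ e)) e (isT : prime 2) (dvdn_gcdr _ _).
case: (leqP a b) => hab.
  have : (gcdn u (2 ^ e) %| v)%N.
    apply: dvdn_trans (dvdn_gcdl v (2 ^ e)).
    by rewrite ea eb dvdn_exp2l.
  by case/(reach _ _ _ m0 um vm) => k [k0 hk]; exists k; split => //; left.
have : (gcdn v (2 ^ e) %| u)%N.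
  apply: dvdn_trans (dvdn_gcdl u (2 ^ e)).
  by rewrite ea eb dvdn_exp2l // ltnW.
by case/(reach _ _ _ m0 vm um) => k [k0 hk]; exists k; split => //; right.
Qed.

Lemma zmod_adj_iff e u v : (u < 2 ^ e)%N -> (v < 2 ^ e)%N ->
  power_adj (zmod_op (2 ^ e)) u v <-> u <> v.
Proof. by move=> um vm; split=> [[]|] //; apply: zmod_adj. Qed.
Local Open Scope nat_scope.

Section Gyro.
Variable n : nat.
Hypothesis hn : (3 <= n)%N.
Local Notation m := (2 ^ n.-1)%N.

Lemma m_half : exists h, m = (2 * h)%N /\ (2 <= h)%N.
Proof.
exists (2 ^ n.-2)%N; split; first by rewrite -expnS; congr (2 ^ _)%N; lia.
have : (2 ^ 1 <= 2 ^ n.-2)%N by rewrite leq_exp2l //; lia.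
by [].
Qed.

Lemma m_pos : (0 < m)%N. Proof. by rewrite expn_gt0. Qed.

Lemma N_eq : (2 ^ n = 2 * m)%N.
Proof. by rewrite -expnS; congr (2 ^ _)%N; lia. Qed.

Lemma gyro_P x a : (x < m)%N -> (a < m)%N -> gyro_op n x a = ((x + a) %% m)%N.
Proof. by move=> xm am; rewrite /gyro_op xm am. Qed.

Lemma gyro_HH a : (m <= a)%N -> gyro_op n a a = 0%N.
Proof.
move=> ma; rewrite /gyro_op ltnNge ma /=.
have [h [eh h2]] := m_half.
rewrite eh mulKn //.
have -> : ((h + 1) * a + (h - 1) * a = a * (2 * h))%N.
  by rewrite -mulnDl mulnC; congr (_ * _)%N; lia.
by rewrite modnMl.
Qed.

Lemma gyro_0H a : (m <= a < 2 * m)%N -> gyro_op n 0 a = a.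
Proof.
move=> /andP [ma am]; rewrite /gyro_op m_pos ltnNge ma /= add0n.
have -> : a = ((a - m) + m)%N by lia.
rewrite modnDr modn_small; lia.
Qed.

Lemma iter_gyroP a j : (a < m)%N ->
  iter j (fun x => gyro_op n x a) a = iter j (fun x => zmod_op m x a) a.
Proof.
move=> am; elim: j => [|j IH] //=; rewrite IH iter_zmod // gyro_P //.
by rewrite ltn_mod m_pos.
Qed.

Lemma pw_gyroP a k : (a < m)%N -> pw (gyro_op n) a k = pw (zmod_op m) a k.
Proof. by move=> am; rewrite /pw iter_gyroP. Qed.

Lemma pw_gyroH a k : (m <= a < 2 * m)%N ->
  pw (gyro_op n) a k = a \/ pw (gyro_op n) a k = 0%N.
Proof.
move=> ha; rewrite /pw; elim: k.-1 => [|j IH] /=; first by left.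
case: IH => ->; [right; apply: gyro_HH | left; apply: gyro_0H] => //.
by case/andP: ha.
Qed.

Lemma not_reach u v k : (u < 2 * m)%N -> (v < 2 * m)%N -> u <> v -> u <> 0%N -> v <> 0%N ->
  ~~ ((u < m) && (v < m))%N -> (0 < k)%N -> pw (gyro_op n) u k <> v.
Proof.
move=> um vm uv u0 v0 h k0.
case: (ltnP u m) => hu.
  rewrite pw_gyroP // pw_zmod // => e.
  move: h; rewrite hu /= -e ltn_mod m_pos //.
have hu2 : (m <= u < 2 * m)%N by rewrite hu.
by case: (pw_gyroH u k hu2) => -> // e; apply: v0; rewrite -e.
Qed.

Lemma gyro_adj_iff u v : (u < 2 * m)%N -> (v < 2 * m)%N ->
  power_adj (gyro_op n) u v <->
  (u != v) && [|| u == 0%N, v == 0%N | (u < m) && (v < m)]%N.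
Proof.
move=> um vm; split.
  case=> uv [k [k0 h]]; apply/andP; split; first by apply/eqP.
  case: (u =P 0%N) => //= u0; case: (v =P 0%N) => //= v0.
  apply/negPn/negP => hn'.
  case: h; first exact: not_reach.
  apply: not_reach => //; first by move/esym.
  by rewrite andbC.
case/andP => /eqP uv h; split => //.
have zm : forall x y, (x < m)%N -> (y < m)%N -> x <> y ->
    exists k, (0 < k)%N /\ (pw (gyro_op n) x k = y \/ pw (gyro_op n) y k = x).
  move=> x y xm ym xy; case: (zmod_adj _ _ _ xm ym xy) => _ [k [k0 hk]].
  by exists k; rewrite !pw_gyroP.
have two : forall a, (m <= a)%N -> pw (gyro_op n) a 2 = 0%N.
  by move=> a ma; rewrite /pw /= gyro_HH.
case/or3P: h => [/eqP u0|/eqP v0|/andP [hu hv]]; last exact: zm.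
  subst u; case: (ltnP v m) => hv; first by apply: zm; rewrite ?m_pos.
  by exists 2%N; split => //; right; apply: two.
subst v; case: (ltnP u m) => hu; first by apply: zm; rewrite ?m_pos.
by exists 2%N; split => //; left; apply: two.
Qed.

End Gyro.
Local Open Scope nat_scope.
Local Open Scope ring_scope.

Definition bgy (m i j : nat) : bool :=
  (i != j) && [|| i == 0%N, j == 0%N | (i < m) && (j < m)]%N.

Definition gf (R : realType) (m : nat) (y z : R) (i : nat) : R :=
  if i == 0%N then 1 else if (i < m)%N then y else z.

Arguments gf {R}.

Lemma sum_const_on (R : realType) (a b : nat) (F : nat -> R) c :
  (forall i, (a <= i < b)%N -> F i = c) -> \sum_(a <= i < b) F i = c *+ (b - a).
Proof. by move=> h; rewrite -sumr_const_nat; apply: eq_big_nat. Qed.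

Lemma gf0 (R : realType) m (y z : R) : gf m y z 0 = 1. Proof. by []. Qed.
Lemma gfP (R : realType) m (y z : R) i : (0 < i < m)%N -> gf m y z i = y.
Proof.
rewrite /gf => h; have -> : (i == 0%N) = false by lia.
by have -> : (i < m)%N by lia.
Qed.
Lemma gfH (R : realType) m (y z : R) i : (0 < m <= i)%N -> gf m y z i = z.
Proof.
rewrite /gf => h; have -> : (i == 0%N) = false by lia.
by have -> : (i < m)%N = false by lia.
Qed.

Lemma bgyT m i j : (i != j) && [|| i == 0%N, j == 0%N | (i < m) && (j < m)]%N -> bgy m i j = true.
Proof. by move=> h; rewrite /bgy h. Qed.
Lemma bgyF m i j : ~~ ((i != j) && [|| i == 0%N, j == 0%N | (i < m) && (j < m)]%N) -> bgy m i j = false.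
Proof. by rewrite /bgy => /negPf. Qed.

Lemma sumg (R : realType) (m : nat) (y z : R) (j : nat) : (2 <= m)%N -> (j < 2 * m)%N ->
  \sum_(0 <= i < 2 * m) gf m y z i * (bgy m i j)%:R =
  if j == 0%N then y *+ (m - 1) + z *+ m else if (j < m)%N then 1 + y *+ (m - 2) else 1.
Proof.
move=> m2 jm.
rewrite (big_cat_nat (n := 1)) //; try lia.
rewrite (big_cat_nat (m := 1) (n := m)) //=; try lia.
rewrite big_nat1 gf0 mul1r.
case: (j =P 0%N) => [->|/eqP j0] /=.
  rewrite add0r.
  rewrite (@sum_const_on _ _ _ _ y); last first.
    by move=> i hi; rewrite gfP ?bgyT ?mulr1 //; lia.
  rewrite (@sum_const_on _ _ _ _ z); last first.
    by move=> i hi; rewrite gfH ?bgyT ?mulr1 //; lia.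
  by congr (_ + _); congr (_ *+ _); lia.
rewrite bgyT; last lia.
case: (ltnP j m) => hjm.
  rewrite (@sum_const_on _ m _ _ 0); last first.
    by move=> i hi; rewrite gfH ?bgyF ?mulr0 //; lia.
  rewrite mul0rn addr0; congr (_ + _).
  rewrite (big_cat_nat (n := j)) //=; try lia.
  rewrite (big_cat_nat (m := j) (n := j.+1)) //=; try lia.
  rewrite big_nat1 bgyF ?mulr0 ?addr0; last lia.
  rewrite (@sum_const_on _ _ _ _ y); last first.
    by move=> i hi; rewrite gfP ?bgyT ?mulr1 //; lia.
  rewrite (@sum_const_on _ j.+1 _ _ y); last first.
    by move=> i hi; rewrite gfP ?bgyT ?mulr1 //; lia.
  by rewrite add0r -mulrnDr; congr (_ *+ _); lia.
rewrite (@sum_const_on _ 1%N _ _ 0); last first.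
  by move=> i hi; rewrite gfP ?bgyF ?mulr0 //; lia.
rewrite (@sum_const_on _ m _ _ 0); last first.
  by move=> i hi; rewrite gfH ?bgyF ?mulr0 //; lia.
by rewrite !mul0rn !addr0.
Qed.
Local Open Scope nat_scope.
Local Open Scope ring_scope.

Lemma asbool_iff (P : Prop) (b : bool) : (P <-> b) -> asbool P = b.
Proof. by move=> h; rewrite (asbool_equiv_eq h) asboolb. Qed.

Lemma sumz (R : realType) (m j : nat) : (j < m)%N ->
  \sum_(0 <= i < m) ((i != j)%:R : R) = 1 *+ (m - 1).
Proof.
move=> jm.
rewrite (big_cat_nat (n := j)) //=; try lia.
rewrite (big_cat_nat (m := j) (n := j.+1)) //=; try lia.
rewrite big_nat1 eqxx add0r.
rewrite (@sum_const_on _ _ _ _ 1); last by move=> i hi; have -> : (i != j) by lia.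
rewrite (@sum_const_on _ j.+1 _ _ 1); last by move=> i hi; have -> : (i != j) by lia.
by rewrite -mulrnDr; congr (_ *+ _); lia.
Qed.

Theorem mainTheorem9 (R : realType) (n : nat) (hn : (3 <= n)%N) :
  exists l1 l2 : R,
    is_lambda1 (power_graph_adjmx R (2 ^ n.-1) (zmod_op (2 ^ n.-1))) l1 /\
    is_lambda1 (power_graph_adjmx R (2 ^ n) (gyro_op n)) l2 /\
    l1 < l2 /\ l2 <= l1 + Num.sqrt ((2 ^ n.-1)%:R).
Proof.
have [h [eh h2]] := m_half n hn.
have m0 := m_pos n.
have NE := N_eq n hn.
set m := (2 ^ n.-1)%N in eh m0 NE *.
have m4 : (4 <= m)%N by lia.
set M : R := m%:R.
have M4 : 4 <= M by rewrite /M (ler_nat R 4 m).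
have [x [x1 [x2 cx]]] := cubic_root _ _ M4.
exists (M - 1), x; split; last split; last by split; lra.
-
  set A := power_graph_adjmx R m (zmod_op m).
  have Ae : forall i j : 'I_m, A i j = ((i : nat) != j)%:R.
    move=> i j; rewrite /A /power_graph_adjmx mxE; congr (_%:R).
    congr (nat_of_bool _); apply: asbool_iff; rewrite zmod_adj_iff ?ltn_ord //.
    by split => [/eqP|/eqP].
  pose w : 'rV[R]_m := const_mx 1.
  have hw : w *m A = (M - 1) *: w.
    apply/rowP => j; rewrite !mxE.
    under eq_bigr => i _ do rewrite Ae !mxE mul1r.
    rewrite -(big_mkord xpredT (fun i => ((i != j)%:R : R))) sumz ?ltn_ord //.
    by rewrite mulr1 /M natrB // mulr1n.
  split.
    apply/eigenvalueP; exists w => //.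
    apply/eqP => /rowP /(_ (Ordinal m0)); rewrite !mxE => /eqP.
    by rewrite oner_eq0.
  apply: (@eig_le _ _ _ w) => //.
    by move=> i j; rewrite Ae ler0n.
  by move=> j; rewrite mxE ltr01.
-
  set A := power_graph_adjmx R (2 ^ n) (gyro_op n).
  have Ae : forall i j : 'I_(2 ^ n), A i j = (bgy m i j)%:R.
    move=> i j; rewrite /A /power_graph_adjmx mxE; congr (_%:R).
    congr (nat_of_bool _); apply: asbool_iff; rewrite gyro_adj_iff //; try by rewrite -/m -NE ltn_ord.
  set y := (x - M + 2)^-1.
  set z := x^-1.
  have xpos : 0 < x by lra.
  have ypos : 0 < x - M + 2 by lra.
  pose w : 'rV[R]_(2 ^ n) := \row_i gf m y z i.
  have hw : w *m A = x *: w.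
    apply/rowP => j; rewrite !mxE.
    under eq_bigr => i _ do rewrite Ae !mxE.
    rewrite -(big_mkord xpredT (fun i => gf m y z i * (bgy m i j)%:R)).
    have jm : (j < 2 * m)%N by rewrite -NE ltn_ord.
    have := @sumg R m y z j (leq_trans (isT : (2 <= 4)%N) m4) jm.
    rewrite -NE => ->.
    rewrite /gf.
    case: eqP => [_|j0].
      rewrite -[y *+ _]mulr_natr -[z *+ _]mulr_natr natrB ?(leq_trans _ m4) // /y /z -/M mulr1.
      apply/eqP; rewrite -subr_eq0; apply/eqP.
      have xn0 := lt0r_neq0 xpos; have yn0 := lt0r_neq0 ypos.
      have -> : (x - M + 2)^-1 * (M - 1%:R) + x^-1 * M - x =
        - (x ^+ 3 - (M - 2) * x ^+ 2 - (2 * M - 1) * x + M * (M - 2)) / (x * (x - M + 2)).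
        by field; apply/andP; split.
      by apply/eqP; rewrite mulf_eq0 oppr_eq0; apply/orP; left; apply/eqP; exact: cx.
    case: ifP => _.
      rewrite -[y *+ _]mulr_natr natrB ?(leq_trans _ m4) // /y -/M.
      have yn0 := lt0r_neq0 ypos.
      by field.
    by rewrite /z divff // lt0r_neq0.
  have wpos : forall j, 0 < w 0 j.
    move=> j; rewrite mxE /gf; case: eqP => _ //; case: ifP => _.
      by rewrite invr_gt0.
    by rewrite invr_gt0.
  split.
    apply/eigenvalueP; exists w => //.
    by apply/eqP => /rowP /(_ (Ordinal (expn_gt0 2 n))) /eqP; rewrite !mxE /gf /= oner_eq0.
  apply: (@eig_le _ _ _ w) => //.
  by move=> i j; rewrite Ae ler0n.
Qed.
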